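(* Assume $X$ satisfies condition (P). Then for all $x\in W_c$ and $w\in W\setminus W_c$, $$\sum_{x\le y\le w}D_{x,y}\,P_{y,w}=0.$$
   Context: Let $X$ be a Coxeter graph with Coxeter system $(W,S)$, length function $\ell$, Bruhat order $\le$, identity $e$; write $\varepsilon_w=(-1)^{\ell(w)}$ and $\ell(x,w)=\ell(w)-\ell(x)$. An element of $W$ is fully commutative if any two of its reduced expressions are related by a sequence of moves $ss'\leftrightarrow s's$ with $s,s'\in S$ commuting; $W_c$ denotes the set of fully commutative elements, $[x,w]_c=\{y\in W_c:x\le y\le w\}$ and $(x,w)_c=\{y\in W_c:x<y<w\}$. $\mathcal H$ is the Hecke algebra of $W$ over $\mathcal A=\mathbb Z[q^{1/2},q^{-1/2}]$ with basis $\{T_w\}_{w\in W}$ and multiplication $T_wT_s=T_{ws}$ if $\ell(ws)>\ell(w)$, $T_wT_s=qT_{ws}+(q-1)T_w$ if $\ell(ws)<\ell(w)$. $J$ is the two-sided ideal generated by the elements $\sum_{w\in\langle s,s'\rangle}T_w$ for all pairs of non-commuting $s,s'\in S$ such that $ss'$ has finite order; $TL(X)=\mathcal H/J$, $\sigma:\mathcal H\to TL(X)$ the projection, $t_w=\sigma(T_w)$. $\{t_w:w\in W_c\}$ is an $\mathcal A$-basis of $TL(X)$; for $w\in W$ the polynomials $D_{x,w}\in\mathbb Z[q]$ ($x\in W_c$) are defined by $t_w=\sum_{x\in W_c,\,x\le w}D_{x,w}t_x$, with $D_{x,w}=0$ if $x\not\le w$ (so $D_{x,w}=\delta_{x,w}$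 when $w\in W_c$). Let $\iota$ be the ring involution of $\mathcal H$ with $\iota(q^{1/2})=q^{-1/2}$, $\iota(T_w)=(T_{w^{-1}})^{-1}$; it preserves $J$ and so induces an involution of $TL(X)$. $R_{x,w}$ are the $R$-polynomials, defined by $(T_{w^{-1}})^{-1}=\varepsilon_wq^{-\ell(w)}\sum_{x\le w}\varepsilon_xR_{x,w}T_x$, and $P_{x,w}$ are the Kazhdan–Lusztig polynomials, so that $C'_w=q^{-\ell(w)/2}\sum_{x\le w}P_{x,w}T_x$ is $\iota$-invariant, $P_{w,w}=1$, $\deg P_{x,w}\le(\ell(x,w)-1)/2$ for $x<w$. For $w\in W_c$, the polynomials $a_{y,w}\in\mathbb Z[q]$ ($y\in W_c$) are defined by $\iota(t_w)=(t_{w^{-1}})^{-1}=q^{-\ell(w)}\sum_{y\in W_c,\,y\le w}a_{y,w}t_y$, $a_{y,w}=0$ if $y\not\le w$. Let $p\mapsto\overline p$ be the ring involution of $\mathbb Z[q^{1/2},q^{-1/2}]$ with $q^{1/2}\mapsto q^{-1/2}$. For $w\in W_c$, $\{L_{x,w}\}_{x\in W_c}$ is the unique family in $\mathbb Z[q^{-1/2}]$ with $L_{x,w}=0$ if $x\not\le w$, $L_{w,w}=1$, $L_{x,w}\in q^{-1/2}\mathbb Z[q^{-1/2}]$ if $x<w$, and $L_{x,w}=\sum_{y\in[x,w]_c}q^{(\ell(x)-\ell(y))/2}a_{x,y}\,\overline{L_{y,w}}$; set $c_w=\sum_{x\in W_c,\,x\le w}q^{-\ell(x)/2}L_{x,w}t_x$.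 Condition (P) on $X$: $\sigma(C'_w)=c_w$ for all $w\in W_c$ and $\sigma(C'_w)=0$ for all $w\in W\setminus W_c$. (For finite irreducible or affine $X$, this holds exactly when $X$ has no vertex adjacent to three or more vertices and $X\neq\widetilde F_4$; in particular types $A$, $B$, $F_4$, $H_3$, $H_4$, $I_2(m)$.) *)

(* Defs.v *)
From HB Require Import structures.
From mathcomp Require Import all_boot all_order all_algebra.
From Stdlib Require Import ClassicalEpsilon Relations.
Set Implicit Arguments. Unset Strict Implicit. Unset Printing Implicit Defensive.
Import GRing.Theory.

Definition pbool (P : Prop) : bool :=
  if excluded_middle_informative P then true else false.

(* Sum of a finitely supported family F : I -> M over a (possibly infinite)
   index type I.  If the support of F is finite, this is the usual sum
   \sum_{y} F y; (it is 0 by convention otherwise, a case that never occurs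
   in the statement, since all sums there are over Bruhat intervals or
   finite dihedral subgroups). *)
Section Finsum.
Local Open Scope ring_scope.
Variables (I : eqType) (M : nmodType).
Definition fin_support_seq (F : I -> M) (s : seq I) : Prop :=
  uniq s /\ forall y, F y != 0 -> y \in s.
Definition fsum (F : I -> M) : M :=
  let s := epsilon (inhabits [::]) (fin_support_seq F) in
  if pbool (fin_support_seq F s) then \sum_(y <- s) F y else 0.
End Finsum.

Section Coxeter.
Local Open Scope group_scope.
Variables (S : finType) (W : groupType) (gen : S -> W).

Definition wprod (s : seq S) : W := foldr (fun a w => gen a * w) 1 s.

(* Coxeter matrix of a Coxeter graph X on the vertex set S:
   m s s = 1, m s t = m t s >= 2 for s <> t, with m s t = 0 encoding
   m(s,t) = infinity (label infinity in the graph); m s t = 2 iff s,t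
   are not joined in X, m s t = 3 for an unlabelled edge, etc. *)
Definition coxeter_matrix (m : S -> S -> nat) : Prop :=
  [/\ forall s, m s s = 1%N, forall s t, m s t = m t s &
      forall s t, s != t -> m s t != 1%N].

Definition satisfies_relations (G : groupType) (m : S -> S -> nat)
    (f : S -> G) : Prop :=
  forall s t, m s t != 0%N -> (f s * f t) ^+ (m s t) = 1.

(* (W, gen(S)) is the Coxeter system of the Coxeter graph with matrix m:
   W is the group presented by generators S and the Coxeter relations. *)
Definition coxeter_system (m : S -> S -> nat) : Prop :=
  [/\ coxeter_matrix m, satisfies_relations m gen,
      (forall w : W, exists s : seq S, w = wprod s) &
      (forall (G : groupType) (f : S -> G), satisfies_relations m f ->
         exists phi : W -> G,
           (forall x y, phi (x * y) = phi x * phi y) /\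
           (forall s, phi (gen s) = f s))].

Definition is_word_of (w : W) (n : nat) : Prop :=
  exists s : seq S, size s = n /\ wprod s = w.
Definition len (w : W) : nat :=
  epsilon (inhabits 0%N)
    (fun n => is_word_of w n /\ forall k, is_word_of w k -> (n <= k)%N).

Definition reduced_expr (w : W) (s : seq S) : Prop :=
  wprod s = w /\ size s = len w.

Inductive comm_move : seq S -> seq S -> Prop :=
  | CommMove (l r : seq S) (a b : S) :
      gen a * gen b = gen b * gen a ->
      comm_move (l ++ a :: b :: r) (l ++ b :: a :: r).

Definition comm_equiv : seq S -> seq S -> Prop :=
  clos_refl_trans (seq S) comm_move.

Definition fully_commutative (w : W) : Prop :=
  forall s1 s2, reduced_expr w s1 -> reduced_expr w s2 -> comm_equiv s1 s2.

Definition reflection (t : W) : Prop :=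
  exists (u : W) (s : S), t = u * gen s * u^-1.
Definition bruhat_step (x y : W) : Prop :=
  exists t, reflection t /\ y = x * t /\ (len x < len y)%N.
Definition bruhat_le : W -> W -> Prop := clos_refl_trans W bruhat_step.

Definition in_subgroup2 (s t : S) (w : W) : Prop :=
  exists l : seq S, (forall a, a \in l -> (a == s) || (a == t)) /\ wprod l = w.

Definition J_pair (st : S * S) : Prop :=
  gen st.1 * gen st.2 != gen st.2 * gen st.1 /\
  exists n, (0 < n)%N /\ (gen st.1 * gen st.2) ^+ n = 1.

End Coxeter.

Section Hecke.
Local Open Scope ring_scope.

Variable (A : comUnitRingType) (v : A).  (* v plays the role of q^{1/2} *)

Definition evq (p : {poly int}) : A := (map_poly intr p).[v ^+ 2].
Definition evv (p : {poly int}) : A := (map_poly intr p).[v].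
Definition evu (p : {poly int}) : A := (map_poly intr p).[v^-1].

(* (A, v) is (isomorphic to) Z[q^{1/2}, q^{-1/2}] with q^{1/2} = v *)
Definition laurent_ring : Prop :=
  [/\ v \is a GRing.unit,
      (forall p : {poly int}, evv p = 0 -> p = 0) &
      (forall a : A, exists (p : {poly int}) (n : nat), a = evv p * v ^- n)].

Definition is_basis_on (I : eqType) (Pw : I -> Prop) (M : lmodType A)
    (t : I -> M) : Prop :=
  (forall (s : seq I) (c : I -> A), uniq s -> (forall y, y \in s -> Pw y) ->
      \sum_(y <- s) c y *: t y = 0 -> forall y, y \in s -> c y = 0) /\
  (forall z : M, exists (s : seq I) (c : I -> A),
      (forall y, y \in s -> Pw y) /\ z = \sum_(y <- s) c y *: t y).

Variables (S : finType) (W : groupType) (gen : S -> W).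
Variables (H : algType A) (T : W -> H).

Definition is_hecke_algebra : Prop :=
  [/\ is_basis_on (fun _ => True) T, T 1%g = 1,
      (forall w s, (len gen w < len gen (w * gen s)%g)%N ->
          T w * T (gen s) = T (w * gen s)%g) &
      (forall w s, (len gen (w * gen s)%g < len gen w)%N ->
          T w * T (gen s) = v ^+ 2 *: T (w * gen s)%g + (v ^+ 2 - 1) *: T w)].

Definition is_iota (bar : A -> A) (iota : H -> H) : Prop :=
  (forall (a : A) (h : H), iota (a *: h) = bar a *: iota h) /\
  (forall w, iota (T w) * T (w^-1)%g = 1 /\ T (w^-1)%g * iota (T w) = 1).

Definition Cp (P : W -> W -> {poly int}) (w : W) : H :=
  (v^-1) ^+ (len gen w) *:
    fsum (fun x => if pbool (bruhat_le gen x w) then evq (P x w) *: T x else 0).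

Definition is_KL (iota : H -> H) (P : W -> W -> {poly int}) : Prop :=
  [/\ (forall w, P w w = 1),
      (forall x w, ~ bruhat_le gen x w -> P x w = 0),
      (forall x w, bruhat_le gen x w -> x <> w -> P x w != 0 ->
          (2 * (size (P x w)).-1 < len gen w - len gen x)%N) &
      (forall w, iota (Cp P w) = Cp P w)].

Definition jgen (st : S * S) : H :=
  fsum (fun w => if pbool (in_subgroup2 gen st.1 st.2 w) then T w else 0).

Definition in_J (h : H) : Prop :=
  exists l : seq (H * (S * S) * H),
    (forall z, z \in l -> J_pair gen z.1.2) /\
    h = \sum_(z <- l) z.1.1 * jgen z.1.2 * z.2.

Variables (TL : algType A) (sigma : H -> TL).

(* sigma : H -> TL is (isomorphic to) the projection H -> H / J *)
Definition is_TL_quotient : Prop :=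
  [/\ (forall a h, sigma (a *: h) = a *: sigma h),
      (forall z : TL, exists h, sigma h = z) &
      (forall h, sigma h = 0 <-> in_J h)].

Definition tTL (w : W) : TL := sigma (T w).

Definition is_D (D : W -> W -> {poly int}) : Prop :=
  (forall w, tTL w = fsum (fun x =>
      if pbool (fully_commutative gen x /\ bruhat_le gen x w)
      then evq (D x w) *: tTL x else 0)) /\
  (forall x w, fully_commutative gen x -> ~ bruhat_le gen x w -> D x w = 0).

(* a-polynomials: iota(t_w) = q^{-l(w)} sum_{y in W_c, y <= w} a_{y,w} t_y,
   where iota(t_w) = sigma (iota (T_w)) is the induced involution *)
Definition is_a (iota : H -> H) (a : W -> W -> {poly int}) : Prop :=
  (forall w, fully_commutative gen w ->
     sigma (iota (T w)) = (v^-1) ^+ (2 * len gen w) *: fsum (fun y =>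
        if pbool (fully_commutative gen y /\ bruhat_le gen y w)
        then evq (a y w) *: tTL y else 0)) /\
  (forall y w, fully_commutative gen y -> fully_commutative gen w ->
     ~ bruhat_le gen y w -> a y w = 0).

(* L-polynomials; L x w is a polynomial in q^{-1/2}, evaluated by evu *)
Definition is_L (bar : A -> A) (a L : W -> W -> {poly int}) : Prop :=
  forall x w, fully_commutative gen x -> fully_commutative gen w ->
  [/\ (~ bruhat_le gen x w -> L x w = 0),
      (x = w -> L x w = 1),
      (bruhat_le gen x w -> x <> w -> (L x w)`_0 = 0) &
      evu (L x w) = fsum (fun y =>
         if pbool (fully_commutative gen y /\ bruhat_le gen x y /\ bruhat_le gen y w)
         then v ^+ (len gen x) * (v^-1) ^+ (len gen y) * evq (a x y)
              * bar (evu (L y w))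
         else 0)].

Definition c_elt (L : W -> W -> {poly int}) (w : W) : TL :=
  fsum (fun x => if pbool (fully_commutative gen x /\ bruhat_le gen x w)
                 then ((v^-1) ^+ (len gen x) * evu (L x w)) *: tTL x else 0).

Definition condition_P (P L : W -> W -> {poly int}) : Prop :=
  (forall w, fully_commutative gen w -> sigma (Cp P w) = c_elt L w) /\
  (forall w, ~ fully_commutative gen w -> sigma (Cp P w) = 0).

End Hecke.

(* Main.v *)
Require Import Defs.
From HB Require Import structures.
From mathcomp Require Import all_boot all_order all_algebra.
From Stdlib Require Import ClassicalEpsilon Relations.
Set Implicit Arguments. Unset Strict Implicit. Unset Printing Implicit Defensive.
Import GRing.Theory.
Local Open Scope ring_scope.

Lemma pboolP (P : Prop) : reflect P (pbool P).
Proof. rewrite /pbool; case: excluded_middle_informative => h; by constructor. Qed.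

Lemma sum_supp_eq (I : eqType) (M : nmodType) (F : I -> M) (s s' : seq I) :
  uniq s -> uniq s' -> (forall y, F y != 0 -> y \in s) ->
  (forall y, F y != 0 -> y \in s') ->
  \sum_(y <- s) F y = \sum_(y <- s') F y.
Proof.
move=> us us' hs hs'.
have E : forall (a b : seq I), (forall y, F y != 0 -> y \in b) ->
   \sum_(y <- a) F y = \sum_(y <- a | y \in b) F y.
  move=> a b hb; rewrite [RHS]big_mkcond; apply: eq_bigr => y _.
  case: (boolP (y \in b)) => // hn; case: (eqVneq (F y) 0) => // /hb h.
  by rewrite h in hn.

rewrite (E s s' hs') (E s' s hs) -big_filter -[in RHS]big_filter; apply: perm_big.
apply: uniq_perm; rewrite ?filter_uniq // => y.
by rewrite !mem_filter andbC.
Qed.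

Lemma fsum_eq (I : eqType) (M : nmodType) (F : I -> M) (s : seq I) :
  uniq s -> (forall y, F y != 0 -> y \in s) -> fsum F = \sum_(y <- s) F y.
Proof.
move=> us hs; rewrite /fsum.
have H : fin_support_seq F (epsilon (inhabits [::]) (fin_support_seq F)).
  by apply: epsilon_spec; exists s.
case: pboolP => // _; case: H => u1 h1; exact: sum_supp_eq.
Qed.

Section Cox.
Local Close Scope ring_scope.
Local Open Scope nat_scope.
Variables (S : finType) (W : groupType) (gen : S -> W).
Hypothesis genW : forall w : W, exists s : seq S, w = wprod gen s.

Lemma len_spec w : is_word_of gen w (len gen w) /\ forall k, is_word_of gen w k -> (len gen w <= k)%N.
Proof.
rewrite /len; apply: (@epsilon_spec nat (inhabits 0%N) (fun n => is_word_of gen w n /\ forall k, is_word_of gen w k -> (n <= k)%N)).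
have ex : exists n, pbool (is_word_of gen w n).
  case: (genW w) => s ->; exists (size s); apply/pboolP; by exists s.
case: (ex_minnP ex) => n /pboolP hn hmin; exists n; split => // k hk.
by apply: hmin; apply/pboolP.
Qed.

Lemma bruhat_len x y : bruhat_le gen x y -> (len gen x <= len gen y)%N.
Proof.
elim=> [a b [t [_ [_ h]]]|a|a b c _ h1 _ h2]; first exact: ltnW.
  by [].
exact: leq_trans h1 h2.
Qed.

Fixpoint allw (n : nat) : seq (seq S) :=
  if n is n'.+1 then [::] :: [seq a :: t | a <- enum S, t <- allw n'] else [:: [::]].

Lemma allwP n s : (size s <= n)%N -> s \in allw n.
Proof.
elim: n s => [|n IH] [|a t] //= h.
rewrite inE; apply/orP; right.
by apply: (allpairs_f (fun a t => a :: t)); rewrite ?mem_enum //; apply: IH.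
Qed.

Definition Uw (w : W) : seq W := undup (map (wprod gen) (allw (len gen w))).

Lemma Uw_uniq w : uniq (Uw w). Proof. exact: undup_uniq. Qed.

Lemma inUw w y : (len gen y <= len gen w)%N -> y \in Uw w.
Proof.
move=> h; case: (len_spec y) => [[s [hs <-]] _].
rewrite mem_undup; apply: map_f; apply: allwP; by rewrite hs.
Qed.
End Cox.

Section Ev.
Variables (A : comUnitRingType) (v : A).
Lemma evq0 : evq v 0 = 0. Proof. by rewrite /evq rmorph0 horner0. Qed.
Lemma evqM p q : evq v (p * q) = evq v p * evq v q.
Proof. by rewrite /evq rmorphM hornerM. Qed.
Lemma evq_sum (I : Type) (r : seq I) (F : I -> {poly int}) :
  evq v (\sum_(i <- r) F i) = \sum_(i <- r) evq v (F i).
Proof. by rewrite /evq rmorph_sum horner_sum. Qed.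
Lemma evq_evv p : evq v p = evv v (p \Po 'X^2).
Proof.
by rewrite /evq /evv map_comp_poly horner_comp map_polyXn hornerXn.
Qed.
Lemma evq_inj p : (forall q : {poly int}, evv v q = 0 -> q = 0) -> evq v p = 0 -> p = 0.
Proof.
move=> h; rewrite evq_evv => /h /eqP; rewrite comp_poly_eq0 ?size_polyXn //.
by move/eqP.
Qed.
End Ev.

Theorem mainTheorem3
  (* the Coxeter graph X (Coxeter matrix m on the vertex set S) and its
     Coxeter system (W, S) *)
  (S : finType) (W : groupType) (gen : S -> W) (m : S -> S -> nat)
  (HW : coxeter_system gen m)
  (* A = Z[q^{1/2}, q^{-1/2}], v = q^{1/2}, and the bar involution *)
  (A : comUnitRingType) (v : A) (HA : laurent_ring v)
  (bar : {rmorphism A -> A}) (Hbar : bar v = v^-1)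
  (* the Hecke algebra H with standard basis T and its involution iota *)
  (H : algType A) (T : W -> H) (HH : is_hecke_algebra v gen T)
  (iota : {rmorphism H -> H}) (Hiota : is_iota T bar iota)
  (* Kazhdan-Lusztig polynomials *)
  (P : W -> W -> {poly int}) (HP : is_KL v gen T iota P)
  (* TL(X) = H / J and the projection sigma *)
  (TL : algType A) (sigma : {rmorphism H -> TL})
  (Hsigma : is_TL_quotient gen T sigma)
  (* the (known) fact that {t_w : w in W_c} is an A-basis of TL(X) *)
  (Hbasis : is_basis_on (fully_commutative gen) (tTL T sigma))
  (* the polynomials D, a, L *)
  (D : W -> W -> {poly int}) (HD : is_D v gen T sigma D)
  (a : W -> W -> {poly int}) (Ha : is_a v gen T sigma iota a)
  (L : W -> W -> {poly int}) (HL : is_L v gen bar a L)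
  (* condition (P) on X *)
  (HcondP : condition_P v gen T sigma P L) :
  forall x w : W, fully_commutative gen x -> ~ fully_commutative gen w ->
    fsum (fun y : W => if pbool (bruhat_le gen x y /\ bruhat_le gen y w)
                       then D x y * P y w else 0) = 0.
Proof.
move=> x w fcx nfcw.
case: HW => _ _ genW _.
case: HA => vU evvI _.
case: Hsigma => sigZ _ _.
case: Hbasis => bindep _.
case: HD => Dexp _.
case: HcondP => _ condP2.
set U := Uw gen w.
have inU : forall y, bruhat_le gen y w -> y \in U.
  by move=> y /bruhat_len h; apply: (inUw genW).
have X0 : \sum_(y <- U) (if pbool (bruhat_le gen y w)
     then evq v (P y w) *: tTL T sigma y else 0) = 0.
  have h := condP2 w nfcw.
  rewrite /Cp (@fsum_eq _ _ _ U (Uw_uniq gen w)) in h; last first.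
    by move=> y; case: pboolP => [hy _|_]; [exact: inU | rewrite eqxx].
  rewrite sigZ rmorph_sum in h.
  have := congr1 (fun z => v ^+ len gen w *: z) h.
  rewrite /= scalerA -exprMn mulrV // expr1n scale1r scaler0 => E.
  rewrite -[RHS]E; apply: eq_bigr => y _.
  by case: pboolP => _; rewrite ?sigZ ?rmorph0.
pose cc y z := if pbool (bruhat_le gen y w) &&
     pbool (fully_commutative gen z /\ bruhat_le gen z y)
   then evq v (P y w) * evq v (D z y) else 0.
have X1 : \sum_(z <- U) (\sum_(y <- U) cc y z) *: tTL T sigma z = 0.
  rewrite -[RHS]X0 (eq_bigr (fun z => \sum_(y <- U) cc y z *: tTL T sigma z));
    last by move=> z _; rewrite scaler_suml.
  rewrite exchange_big; apply: eq_bigr => y _; rewrite /cc.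
  case: (pboolP (bruhat_le gen y w)) => hyw /=; last first.
    by rewrite big1 // => z _; rewrite scale0r.
  rewrite (Dexp y) (@fsum_eq _ _ _ U (Uw_uniq gen w)); last first.
    move=> z; case: pboolP => [[_ hzy] _|_]; last by rewrite eqxx.
    apply: (inUw genW); exact: leq_trans (bruhat_len hzy) (bruhat_len hyw).
  rewrite scaler_sumr; apply: eq_bigr => z _.
  by case: pboolP => _; rewrite ?scalerA ?scale0r ?scaler0.
have X2 : \sum_(z <- [seq z <- U | pbool (fully_commutative gen z)])
     (\sum_(y <- U) cc y z) *: tTL T sigma z = 0.
  rewrite big_filter big_mkcond -[RHS]X1; apply: eq_bigr => z _.
  case: pboolP => // hz; rewrite big1 ?scale0r // => y _; rewrite /cc.
  have -> : pbool (fully_commutative gen z /\ bruhat_le gen z y) = false.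
    by apply/pboolP => [[]].
  by rewrite andbF.
have Pw : forall z, z \in [seq z <- U | pbool (fully_commutative gen z)] ->
    fully_commutative gen z.
  by move=> z; rewrite mem_filter => /andP[/pboolP h _].
have Hc := bindep _ (fun z => \sum_(y <- U) cc y z)
   (filter_uniq _ (Uw_uniq gen w)) Pw X2.
rewrite (@fsum_eq _ _ _ U (Uw_uniq gen w)); last first.
  by move=> y; case: pboolP => [[_ hy] _|_]; [exact: inU | rewrite eqxx].
case: (boolP (x \in U)) => xU; last first.
  rewrite big1 // => y _; case: pboolP => // [[hxy hyw]]; exfalso.
  move/negP: xU; apply; apply: (inUw genW).
  exact: leq_trans (bruhat_len hxy) (bruhat_len hyw).
have E : \sum_(y <- U) cc y x = 0.
  by apply: Hc; rewrite mem_filter xU andbT; apply/pboolP.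

apply: (evq_inj evvI).
rewrite evq_sum -[RHS]E; apply: eq_bigr => y _; rewrite /cc.
case: (pboolP (bruhat_le gen x y /\ bruhat_le gen y w)) => [[hxy hyw]|hn].
  by rewrite (introT (pboolP _) hyw) (introT (pboolP _) (conj fcx hxy)) /= evqM mulrC.
rewrite evq0; case: (pboolP (bruhat_le gen y w)) => //= hyw.
by case: pboolP => // [[_ hxy]]; case: hn.
Qed.
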